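(* For any $d\in\mathbb{N}$ and positive integers $m_1,\dots,m_{2d}$, the matrix $\mathsf{C}\mathsf{W}(m_1,\dots,m_{2d})$ has five distinct positive real eigenvalues, namely $1$ and $$\frac{t+4s\pm\sqrt{(t+4s)^2-4}}{2},\qquad \frac{t\pm\sqrt{t^2-4}}{2},$$ where $t=\operatorname{tr}(W_1(m_1,\dots,m_{2d}))$ and $s=\operatorname{tr}^*(W_1(m_1,\dots,m_{2d}))$. Moreover $$\frac{t+4s+\sqrt{(t+4s)^2-4}}{2}>\frac{t+\sqrt{t^2-4}}{2}>1>\frac{t-\sqrt{t^2-4}}{2}>\frac{t+4s-\sqrt{(t+4s)^2-4}}{2}.$$
   Context: $A_1=\begin{pmatrix}1&1\\0&1\end{pmatrix}$, $B_1=\begin{pmatrix}1&0\\1&1\end{pmatrix}$, $W_1(m_1,\dots,m_{2d})=\prod_{i=1}^dA_1^{m_{2i-1}}B_1^{m_{2i}}$. With $\mathsf{A}=\begin{pmatrix}1&1&0&0&2\\0&1&0&0&0\\0&0&1&1&0\\0&0&0&1&0\\0&0&0&0&1\end{pmatrix}$, $\mathsf{B}=\begin{pmatrix}1&0&0&0&0\\1&1&0&0&0\\0&0&1&0&0\\0&0&1&1&2\\0&0&0&0&1\end{pmatrix}$, $\mathsf{C}=\begin{pmatrix}1&0&0&0&0\\0&1&0&0&0\\0&0&1&0&0\\0&0&0&1&0\\2&0&0&2&1\end{pmatrix}$, let $\mathsf{W}(m_1,\dots,m_{2d})=\prod_{i=1}^d\mathsf{A}^{m_{2i-1}}\mathsf{B}^{m_{2i}}$.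 $\operatorname{tr}^*(M)=M_{1,2}+M_{2,1}$ is the anti-trace. *)

(* Defs.v *)
From HB Require Import structures.
From mathcomp Require Import all_boot all_order all_algebra.
Set Implicit Arguments. Unset Strict Implicit. Unset Printing Implicit Defensive.
Import Order.TTheory GRing.Theory Num.Theory.
Local Open Scope ring_scope.

Definition mx_of_nat (R : pzRingType) (n : nat) (rows : seq (seq nat)) : 'M[R]_n :=
  \matrix_(i < n, j < n) (nth 0%N (nth [::] rows i) j)%:R.

Definition A1 (R : pzRingType) : 'M[R]_2 := mx_of_nat R 2 [:: [:: 1; 1]; [:: 0; 1]]%N.
Definition B1 (R : pzRingType) : 'M[R]_2 := mx_of_nat R 2 [:: [:: 1; 0]; [:: 1; 1]]%N.

Definition sA (R : pzRingType) : 'M[R]_5 := mx_of_nat R 5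
  [:: [:: 1; 1; 0; 0; 2];
      [:: 0; 1; 0; 0; 0];
      [:: 0; 0; 1; 1; 0];
      [:: 0; 0; 0; 1; 0];
      [:: 0; 0; 0; 0; 1]]%N.
Definition sB (R : pzRingType) : 'M[R]_5 := mx_of_nat R 5
  [:: [:: 1; 0; 0; 0; 0];
      [:: 1; 1; 0; 0; 0];
      [:: 0; 0; 1; 0; 0];
      [:: 0; 0; 1; 1; 2];
      [:: 0; 0; 0; 0; 1]]%N.
Definition sC (R : pzRingType) : 'M[R]_5 := mx_of_nat R 5
  [:: [:: 1; 0; 0; 0; 0];
      [:: 0; 1; 0; 0; 0];
      [:: 0; 0; 1; 0; 0];
      [:: 0; 0; 0; 1; 0];
      [:: 2; 0; 0; 2; 1]]%N.

(* The exponents m_1, ..., m_{2d} are m 1, ..., m (2d) (1-based, as in the paper).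
   W_1(m) = prod_{i=1}^d A1^{m_{2i-1}} B1^{m_{2i}}  (ordered product, left to right). *)
Definition W1 (R : pzRingType) (d : nat) (m : nat -> nat) : 'M[R]_2 :=
  \prod_(i < d) (A1 R ^+ m (2 * i).+1 * B1 R ^+ m (2 * i).+2).

Definition sW (R : pzRingType) (d : nat) (m : nat -> nat) : 'M[R]_5 :=
  \prod_(i < d) (sA R ^+ m (2 * i).+1 * sB R ^+ m (2 * i).+2).

Definition antitr (R : pzRingType) (M : 'M[R]_2) : R := M 0 1 + M 1 0.

(* Main.v *)
Require Import Defs.
From HB Require Import structures.
From mathcomp Require Import all_boot all_order all_algebra.
From mathcomp Require Import ring lra zify.
Import Order.TTheory GRing.Theory Num.Theory.
Set Implicit Arguments. Unset Strict Implicit.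
Local Open Scope ring_scope.

Definition mxR (R : pzRingType) n (rows : seq (seq R)) : 'M[R]_n :=
  \matrix_(i < n, j < n) nth 0 (nth [::] rows i) j.
Arguments mxR {R} n rows.

Fixpoint rmcol (R : Type) (j : nat) (r : seq R) : seq R :=
  match r, j with [::], _ => [::] | x :: r', 0%N => r' | x :: r', j'.+1 => x :: rmcol j' r' end.

Lemma nth_rmcol (R : Type) (x0 : R) j r l : nth x0 (rmcol j r) l = nth x0 r (bump j l).
Proof.
elim: r j l => [|x r IH] j l; first by case: j => [|j] /=; rewrite !nth_nil.
case: j => [|j] /=; first by rewrite add0n.
case: l => [|l] //=.
by rewrite IH /bump /= addnS.
Qed.

Lemma det_mxR (R : comNzRingType) n (rows : seq (seq R)) :
  \det (mxR n.+1 rows) = \sum_(j <- iota 0 n.+1)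
     nth 0 (nth [::] rows 0) j * ((-1) ^+ j * \det (mxR n (map (rmcol j) (behead rows)))).
Proof.
have -> : iota 0 n.+1 = index_iota 0 n.+1 by rewrite /index_iota subn0.
rewrite (expand_det_row _ ord0) big_mkord; apply: eq_bigr => j _.
rewrite mxE /cofactor /= add0n; congr (_ * (_ * _)); congr (\det _).
apply/matrixP => k l; rewrite !mxE /=.
case: rows => [|r rows] /=; first by rewrite !nth_nil.
have [klt|kge] := ltnP k (size rows).
  by rewrite (nth_map [::]) // nth_rmcol.
by rewrite !nth_default ?size_map // nth_nil.
Qed.

Definition D5 (R : comNzRingType) (x a b c e : R) : 'M[R]_5 := mxR 5
  [:: [:: x - a; -b; 0; 0; -(2*b)];
      [:: -c; x - e; 0; 0; -(2*e-2)];
      [:: 0; 0; x-a; -b; -(2*a-2)];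
      [:: 0; 0; -c; x-e; -(2*c)];
      [:: -(2*a); -(2*b); -(2*c); -(2*e); x - (1+4*b+4*c)]].

Ltac dstep := rewrite ?det_mxR /= ?big_cons ?big_nil ?mul0r ?addr0 ?add0r ?mulr0.

Lemma detD5 (R : comNzRingType) (x a b c e : R) :
  \det (D5 x a b c e) = (x-1)*(x^+2-(a+e)*x+(a*e-b*c))*(x^+2-(a+e+4*(b+c))*x+(a*e-b*c)).
Proof.
rewrite /D5.
dstep. dstep. dstep. dstep. dstep.
rewrite ?det_mx00 /=.
ring.
Qed.
Definition mxR2 (R : pzRingType) (a b c e : R) : 'M[R]_2 := mxR 2 [:: [:: a; b]; [:: c; e]].

Ltac cases2 i j := case: i => [[|[|i]] Hi] //; case: j => [[|[|j]] Hj] //.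

Lemma mul2 (R : comNzRingType) (a b c e a' b' c' e' : R) :
  mxR2 a b c e * mxR2 a' b' c' e' = mxR2 (a*a'+b*c') (a*b'+b*e') (c*a'+e*c') (c*b'+e*e').
Proof.
apply/matrixP => i j; rewrite !mxE !big_ord_recr big_ord0 /= !mxE.
by cases2 i j; rewrite /= add0r.
Qed.

Lemma mx2_eta (R : pzRingType) (X : 'M[R]_2) : X = mxR2 (X 0 0) (X 0 1) (X 1 0) (X 1 1).
Proof.
apply/matrixP => i j; rewrite !mxE.
by cases2 i j; congr (X _ _); apply: val_inj.
Qed.

Definition Phi4 (R : pzRingType) (p q r u : R) : 'M[R]_5 := mxR 5
  [:: [:: p; q; 0; 0; (2*q)];
      [:: r; u; 0; 0; (2*u-2)];
      [:: 0; 0; p; q; (2 * p - 2)];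
      [:: 0; 0; r; u; (2*r)];
      [:: 0; 0; 0; 0; 1]].

Ltac cases5 i j := case: i => [[|[|[|[|[|i]]]]] Hi] //; case: j => [[|[|[|[|[|j]]]]] Hj] //.

Lemma Phi4M (R : comNzRingType) (p q r u p' q' r' u' : R) :
  Phi4 p q r u * Phi4 p' q' r' u' = Phi4 (p* p'+q*r') (p*q'+q*u') (r* p'+u*r') (r*q'+u*u').
Proof.
apply/matrixP => i j; rewrite !mxE !big_ord_recr big_ord0 /= !mxE.
by cases5 i j; rewrite /=; ring.
Qed.

Definition Phi (R : pzRingType) (V : 'M[R]_2) := Phi4 (V 0 0) (V 0 1) (V 1 0) (V 1 1).

Lemma PhiM (R : comNzRingType) (V U : 'M[R]_2) : Phi (V * U) = Phi V * Phi U.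
Proof.
rewrite (mx2_eta V) (mx2_eta U) mul2 /Phi Phi4M !mxE /=.
done.
Qed.

Lemma Phi1 (R : comNzRingType) : Phi (1 : 'M[R]_2) = 1.
Proof.
apply/matrixP => i j; rewrite !mxE.
cases5 i j; rewrite /=.
all: ring.
Qed.

Lemma A1E (R : comNzRingType) : A1 R = mxR2 1 1 0 1.
Proof. by apply/matrixP => i j; rewrite !mxE; cases2 i j. Qed.
Lemma B1E (R : comNzRingType) : B1 R = mxR2 1 0 1 1.
Proof. by apply/matrixP => i j; rewrite !mxE; cases2 i j. Qed.
Lemma sAE (R : comNzRingType) : sA R = Phi (A1 R).
Proof. rewrite A1E; apply/matrixP => i j; rewrite !mxE; cases5 i j; rewrite /=; ring. Qed.
Lemma sBE (R : comNzRingType) : sB R = Phi (B1 R).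
Proof. rewrite B1E; apply/matrixP => i j; rewrite !mxE; cases5 i j; rewrite /=; ring. Qed.
Lemma alg (R : rcfType) (t s : R) : 3 <= t -> 2 <= s ->
  let l1 := (t + 4 * s + Num.sqrt ((t + 4 * s) ^+ 2 - 4)) / 2 in
  let l2 := (t + Num.sqrt (t ^+ 2 - 4)) / 2 in
  let l4 := (t - Num.sqrt (t ^+ 2 - 4)) / 2 in
  let l5 := (t + 4 * s - Num.sqrt ((t + 4 * s) ^+ 2 - 4)) / 2 in
  [/\ (forall x, ((x - 1) * (x ^+ 2 - t * x + 1) * (x ^+ 2 - (t + 4 * s) * x + 1) == 0)
                 = (x \in [:: l1; l2; 1; l4; l5])),
      uniq [:: l1; l2; 1; l4; l5],
      all (fun x => 0 < x) [:: l1; l2; 1; l4; l5],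
      0 <= (t + 4 * s) ^+ 2 - 4 /\ 0 <= t ^+ 2 - 4
    & l1 > l2 /\ l2 > 1 /\ 1 > l4 /\ l4 > l5].
Proof.
move=> Ht Hs l1 l2 l4 l5.
set u := t + 4 * s.
have D1 : 0 <= u ^+ 2 - 4 by rewrite /u; nra.
have D2 : 0 <= t ^+ 2 - 4 by nra.
set S1 := Num.sqrt (u ^+ 2 - 4).
set S2 := Num.sqrt (t ^+ 2 - 4).
have e1 : S1 ^+ 2 = u ^+ 2 - 4 by rewrite sqr_sqrtr.
have e2 : S2 ^+ 2 = t ^+ 2 - 4 by rewrite sqr_sqrtr.
have S1p : 0 <= S1 by rewrite sqrtr_ge0.
have S2p : 0 <= S2 by rewrite sqrtr_ge0.
have q1 x : x ^+ 2 - u * x + 1 = (x - l1) * (x - l5).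
  apply/eqP; rewrite -subr_eq0; apply/eqP.
  have -> : x ^+ 2 - u * x + 1 - (x - l1) * (x - l5) = (4 - u ^+ 2 + S1 ^+ 2) / 4.
    by rewrite /l1 /l5 -/u -/S1; field; lra.
  by rewrite e1 (_ : 4 - u ^+ 2 + (u ^+ 2 - 4) = 0) ?mul0r //; ring.
have q2 x : x ^+ 2 - t * x + 1 = (x - l2) * (x - l4).
  apply/eqP; rewrite -subr_eq0; apply/eqP.
  have -> : x ^+ 2 - t * x + 1 - (x - l2) * (x - l4) = (4 - t ^+ 2 + S2 ^+ 2) / 4.
    by rewrite /l2 /l4 -/S2; field; lra.
  by rewrite e2 (_ : 4 - t ^+ 2 + (t ^+ 2 - 4) = 0) ?mul0r //; ring.
have p15 : l1 * l5 = 1 by have := q1 0; rewrite !(mul0r, mulr0, expr0n, sub0r, add0r, subr0) /=; lra.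
have p24 : l2 * l4 = 1 by have := q2 0; rewrite !(mul0r, mulr0, expr0n, sub0r, add0r, subr0) /=; lra.
have lt12 : l2 < l1.
  rewrite /l1 /l2 -/u -/S1 -/S2.
  have : S2 <= S1 by rewrite /S1 /S2 ler_sqrt // /u; nra.
  rewrite /u; nra.
have lt2 : 1 < l2 by rewrite /l2 -/S2; lra.
have lt4 : l4 < 1.
  rewrite /l4 -/S2.
  have : t - 2 < S2 by nra.
  lra.
have p4 : 0 < l4 by nra.
have p5 : 0 < l5 by nra.
have lt45 : l5 < l4.
  rewrite -subr_gt0.
  have -> : l4 - l5 = l4 * l5 * (l1 - l2).
    have -> : l4 * l5 * (l1 - l2) = l4 * (l1 * l5) - l5 * (l2 * l4) by ring.
    by rewrite p15 p24 !mulr1.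
  by apply: mulr_gt0; [exact: mulr_gt0 | rewrite subr_gt0].
split.
- move=> x; rewrite -/u q1 q2 !mulf_eq0 !subr_eq0 !inE.
  by case: (x == l1); case: (x == l2); case: (x == 1); case: (x == l4); case: (x == l5).
- rewrite /= !inE !negb_or.
  rewrite !gt_eqF ?lt_eqF //; lra.
- rewrite /=; lra.
- by [].
- by [].
Qed.

Lemma PhiX (R : comNzRingType) (V : 'M[R]_2) n : Phi (V ^+ n) = Phi V ^+ n.
Proof. by elim: n => [|n IH]; rewrite ?expr0 ?Phi1 // !exprS PhiM IH. Qed.

Lemma sWE (R : comNzRingType) d m : sW R d m = Phi (W1 R d m).
Proof.
rewrite /sW /W1 (big_morph (@Phi R) (@PhiM R) (@Phi1 R)); apply: eq_bigr => i _.
by rewrite PhiM !PhiX -sAE -sBE.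
Qed.

Definition good (R : rcfType) (X : 'M[R]_2) := exists a b c e, X = mxR2 a b c e /\
  [/\ 2 <= a, 1 <= b, 1 <= c, 1 <= e & a * e - b * c = 1].

Lemma goodM (R : rcfType) (X Y : 'M[R]_2) : good X -> good Y -> good (X * Y).
Proof.
move=> [a [b [c [e [-> [Ha Hb Hc He Hd]]]]]] [a' [b' [c' [e' [-> [Ha' Hb' Hc' He' Hd']]]]]].
rewrite mul2; do 4 eexists; split; first reflexivity.
split; nra.
Qed.

Lemma A1pow (R : comNzRingType) n : A1 R ^+ n = mxR2 1 n%:R 0 1.
Proof.
elim: n => [|n IH].
  by rewrite expr0; apply/matrixP => i j; rewrite !mxE; cases2 i j.
by rewrite exprS IH A1E mul2 mulrS; congr mxR2; ring.
Qed.

Lemma B1pow (R : comNzRingType) n : B1 R ^+ n = mxR2 1 0 n%:R 1.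
Proof.
elim: n => [|n IH].
  by rewrite expr0; apply/matrixP => i j; rewrite !mxE; cases2 i j.
by rewrite exprS IH B1E mul2 mulrS; congr mxR2; ring.
Qed.

Lemma goodG (R : rcfType) (m1 m2 : nat) : (0 < m1)%N -> (0 < m2)%N ->
  good (A1 R ^+ m1 * B1 R ^+ m2).
Proof.
move=> h1 h2; rewrite A1pow B1pow mul2.
have g1 : 1 <= m1%:R :> R by rewrite ler1n.
have g2 : 1 <= m2%:R :> R by rewrite ler1n.
do 4 eexists; split; first reflexivity.
split; nra.
Qed.

Lemma W1good (R : rcfType) d m : (0 < d)%N -> (forall k, (1 <= k <= 2 * d)%N -> (0 < m k)%N) ->
  good (W1 R d m).
Proof.
case: d => // d _ Hm; rewrite /W1.
suff : forall n, (n <= d)%N ->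
  good (\prod_(i < n.+1) (A1 R ^+ m (2 * i).+1 * B1 R ^+ m (2 * i).+2)) by apply.
elim => [|n IH] Hn.
  rewrite big_ord1 /=; apply: goodG; apply: Hm; lia.
rewrite big_ord_recr /=; apply: goodM; first by apply: IH; lia.
apply: goodG; apply: Hm; lia.
Qed.

Lemma eig_det (F : fieldType) n (A : 'M[F]_n) x :
  eigenvalue A x = (\det (x%:M - A) == 0).
Proof.
apply/eigenvalueP/det0P=> [[v Av_av v_nz] | [v v_nz Av_av]]; exists v => //.
  by rewrite mulmxBr Av_av mul_mx_scalar subrr.
by apply/eqP; rewrite -mul_mx_scalar eq_sym -subr_eq0 -mulmxBr Av_av.
Qed.

Lemma charE (R : comNzRingType) (x a b c e : R) :
  x%:M - sC R * Phi (mxR2 a b c e) = D5 x a b c e.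
Proof.
apply/matrixP => i j; rewrite !mxE !big_ord_recr big_ord0 /= !mxE.
by cases5 i j; rewrite /=; ring.
Qed.

Unset Implicit Arguments.
Theorem mainTheorem12 (R : rcfType) (d : nat) (m : nat -> nat) :
  (0 < d)%N ->
  (forall k, (1 <= k <= 2 * d)%N -> (0 < m k)%N) ->
  let t := \tr (W1 R d m) in
  let s := antitr (W1 R d m) in
  let l1 := (t + 4 * s + Num.sqrt ((t + 4 * s) ^+ 2 - 4)) / 2 in
  let l2 := (t + Num.sqrt (t ^+ 2 - 4)) / 2 in
  let l4 := (t - Num.sqrt (t ^+ 2 - 4)) / 2 in
  let l5 := (t + 4 * s - Num.sqrt ((t + 4 * s) ^+ 2 - 4)) / 2 in
  [/\ (forall a : R, eigenvalue (sC R * sW R d m) a <-> a \in [:: l1; l2; 1; l4; l5]),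
      uniq [:: l1; l2; 1; l4; l5],
      all (fun x => 0 < x) [:: l1; l2; 1; l4; l5],
      0 <= (t + 4 * s) ^+ 2 - 4 /\ 0 <= t ^+ 2 - 4
    & l1 > l2 /\ l2 > 1 /\ 1 > l4 /\ l4 > l5].
Proof.
move=> Hd Hm t s l1 l2 l4 l5.
have [a [b [c [e [HW [Ha Hb Hc He Hdet]]]]]] := @W1good R d m Hd Hm.
have Ht : t = a + e.
  by rewrite /t HW /mxtrace !big_ord_recr big_ord0 /= !mxE /= add0r.
have Hs : s = b + c by rewrite /s /antitr HW !mxE.
have Ht3 : 3 <= t by rewrite Ht; lra.
have Hs2 : 2 <= s by rewrite Hs; lra.
have [Heig H2 H3 H4 H5] := alg Ht3 Hs2.
split => // x.
rewrite eig_det sWE HW charE detD5 Hdet -Ht.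
rewrite -Hs.
by rewrite Heig.
Qed.
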